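(* Suppose $Y=X\beta^*\in\mathbb{R}$, where $X\in\mathbb{R}^{1\times p}$ is a jointly continuous random vector and, for every $i\in[p]$, $\beta_i^*\in\mathcal{S}=\{a_1,\dots,a_{\mathcal{R}}\}$, where $\mathcal{S}$ is a rationally independent set known to the learner. Then the IHDR algorithm with input $(Y,\mathcal{S},X)$ terminates with $\hat\beta^*=\beta^*$ with probability $1$, after at most polynomial in $p$ and $\mathcal{R}$ arithmetic operations on real numbers.
   Context: A random vector $X\in\mathbb{R}^p$ is jointly continuous if it has a joint density with respect to Lebesgue measure on $\mathbb{R}^p$. A finite set $\{a_1,\dots,a_k\}\subset\mathbb{R}$ is rationally independent if $\sum q_ia_i=0$ with $q_i\in\mathbb{Q}$ implies all $q_i=0$. An integer relation for $b\in\mathbb{R}^k$ is a nonzero $m\in\mathbb{Z}^k$ with $\langle b,m\rangle=0$. IRA (integer relation algorithm, e.g. PSLQ): given $b\in\mathbb{R}^k$ admitting an integer relation, it outputs an integer relation for $b$ after $O(k^3+k^2\log\|m\|)$ arithmetic operations on reals, where $m$ is an integer relation of smallest Euclidean norm. IHDR algorithm on input $(Y,\mathcal{S},X)$: (1) form $\mathcal{L}=(X_ia_j:i\in[p],j\in[\mathcal{R}])$; (2) run IRA on $(Y,\mathcal{L})$, with output $(b_0,b_{ij}:i\in[p],j\in[\mathcal{R}])$ ($b_0$ the coefficient of $Y$, $b_{ij}$ that of $X_ia_j$); (3) if $b_0=0$ output $\hat\beta^*=0$; (4) otherwise, for each $i\in[p]$ set $\hat\beta^*_i=a_{j(i)}$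 where $j(i)$ is the smallest $j\in[\mathcal{R}]$ with $b_{ij}\neq0$; output $\hat\beta^*$. *)

(* Defs.v *)
From HB Require Import structures.
From mathcomp Require Import all_boot all_order all_algebra.
From mathcomp Require Import all_classical all_reals all_analysis.
Set Implicit Arguments. Unset Strict Implicit. Unset Printing Implicit Defensive.
Import Order.TTheory GRing.Theory Num.Theory.
Import numFieldNormedType.Exports.
Local Open Scope classical_set_scope.
Local Open Scope ring_scope.

Section IHDR.
Variable R : realType.

(** Integral w.r.t. Lebesgue measure on R^n (points of R^n are n-tuples),
    defined as the iterated integral over the coordinates (Tonelli). *)
Fixpoint lebint (n : nat) : (n.-tuple R -> \bar R) -> \bar R :=
  match n return (n.-tuple R -> \bar R) -> \bar R with
  | 0 => fun g => g [tuple]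
  | n'.+1 => fun g =>
      (\int[@lebesgue_measure R]_x lebint (fun t : n'.-tuple R => g (cons_tuple x t)))%E
  end.

Definition jointly_continuous (d : measure_display) (T : measurableType d)
    (P : probability T R) (p : nat) (X : T -> p.-tuple R) : Prop :=
  measurable_fun setT X /\
  exists f : p.-tuple R -> R,
    measurable_fun setT f /\ (forall t, 0 <= f t) /\
    forall A : set (p.-tuple R), measurable A ->
      P (X @^-1` A) = lebint (fun t => ((\1_A t : R) * f t)%:E).

Definition rat_indep (a : seq R) : Prop :=
  forall q : seq rat, size q = size a ->
    \sum_(i < size a) ratr (nth 0 q i) * nth 0 a i = 0 ->
    forall i, nth 0 q i = 0.

Definition int_rel (b : seq R) (m : seq int) : Prop :=
  size m = size b /\ has (fun z => z != 0) m /\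
  \sum_(i < size b) (nth 0 m i)%:~R * nth 0 b i = 0.

Definition znorm (m : seq int) : R :=
  Num.sqrt (\sum_(i < size m) ((nth 0 m i)%:~R : R) ^+ 2).

(** An integer relation algorithm, modelled as a function returning its output
    and the number of arithmetic operations on reals it performs, with
    constant C in the O(k^3 + k^2 log ||m||) bound, m a smallest relation. *)
Definition IRA := seq R -> seq int * nat.

Definition is_IRA (C : R) (ira : IRA) : Prop :=
  forall b : seq R, (exists m, int_rel b m) ->
    int_rel b (ira b).1 /\
    forall m, int_rel b m -> (forall m', int_rel b m' -> znorm m <= znorm m') ->
      ((ira b).2)%:R <= C * ((size b)%:R ^+ 3 + (size b)%:R ^+ 2 * ln (znorm m)).

(** The IHDR algorithm on input (Y, S = a, X = x); returns the estimate and
    the number of real arithmetic operations (p*R products to form L, plus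
    the operations of the IRA call). *)
Definition ihdr (ira : IRA) (Y : R) (a : seq R) (x : seq R) : seq R * nat :=
  let L := flatten [seq [seq xi * aj | aj <- a] | xi <- x] in
  let out := ira (Y :: L) in
  let m := out.1 in
  let bij i j := nth 0 m (1 + i * size a + j)%N in
  ((if head 0 m == 0 then nseq (size x) 0
    else [seq nth 0 a (find (fun j => bij i j != 0) (iota 0 (size a)))
         | i <- iota 0 (size x)]),
   (size x * size a + out.2)%N).

End IHDR.

(* Main.v *)
Require Import Defs.
From HB Require Import structures.
From mathcomp Require Import all_boot all_order all_algebra.
From mathcomp Require Import all_classical all_reals all_analysis.
From mathcomp Require Import zify ring lra.
From mathcomp Require Import measurable_realfun.
Import Order.TTheory GRing.Theory Num.Theory.
Local Open Scope classical_set_scope.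
Local Open Scope ring_scope.

Section Meas.
Context (R : realType).

Lemma lebint0 n (g : n.-tuple R -> \bar R) : (forall t, g t = 0%E) -> lebint g = 0%E.
Proof.
elim: n g => [|n IH] g g0 /=; first exact: g0.
rewrite (_ : (fun x => _) = (fun _ => 0%E)); first exact: integral0.
by apply: funext => x; apply: IH => t.
Qed.

Lemma integral_pt (x0 : R) (h : R -> \bar R) : (forall x, x != x0 -> h x = 0%E) ->
  (\int[@lebesgue_measure R]_x h x = 0)%E.
Proof.
move=> h0.
have -> : h = (fun x => if x == x0 then h x0 else 0%E).
  by apply: funext => x; case: eqP => [->//|/eqP]; apply: h0.
rewrite -[RHS](integral0 (@lebesgue_measure R) setT).
apply: ae_eq_integral => //.
- move=> _ B mB; rewrite setTI.
  have [B1|B1] := pselect (B (h x0)); have [B0|B0] := pselect (B 0%E).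
  + rewrite (_ : _ @^-1` _ = setT) //; apply/seteqP; split => x // _ /=; by case: eqP.
  + rewrite (_ : _ @^-1` _ = [set x0]); first exact: measurable_set1.
    apply/seteqP; split => x /=; first by case: eqP.
    by move=> ->; rewrite eqxx.
  + rewrite (_ : _ @^-1` _ = ~` [set x0]); first by apply: measurableC; exact: measurable_set1.
    apply/seteqP; split => x /=; first by case: eqP.
    by move/eqP/negbTE => ->.
  + rewrite (_ : _ @^-1` _ = set0) //; apply/seteqP; split => x // /=; by case: eqP.
- exists [set x0]; split; first exact: measurable_set1.
    exact: lebesgue_measure_set1.
  move=> x /= hx; apply: contrapT => /eqP/negbTE xx0; apply: hx => _.
  by rewrite xx0.
Qed.

Definition dotc {n} (t c : n.-tuple R) := \sum_(i < n) tnth t i * tnth c i.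

Lemma lebint_hyper n (c : n.-tuple R) (r : R) (g : n.-tuple R -> \bar R) :
  (exists i, tnth c i != 0) -> (forall t, dotc t c != r -> g t = 0%E) ->
  lebint g = 0%E.
Proof.
elim: n c r g => [|n IH] c r g [i ci] gH; first by case: i ci.
have dotS (x : R) (t : n.-tuple R) : dotc (cons_tuple x t) c = x * tnth c ord0 + dotc t [tuple of behead c].
  rewrite /dotc big_ord_recl tnth0; congr (_ + _); apply: eq_bigr => j _.
  rewrite tnthS tnth_behead; congr (_ * _); congr (tnth c _); apply: val_inj => /=.
  by rewrite inordK // ltnS.
rewrite /=.
have [[j cj]|] := pselect (exists j, tnth [tuple of behead c] j != 0).
  rewrite (_ : (fun x => _) = (fun _ => 0%E)); first exact: integral0.
  apply: funext => x; apply: (IH [tuple of behead c] (r - x * tnth c ord0)); first by exists j; exact: cj.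
  move=> t H; apply: gH.
  by rewrite dotS; apply: contra H => /eqP <-; rewrite [x * _ + _]addrC addrK.
move=> nb.
have c0 : tnth c ord0 != 0.
  apply/negP => /eqP c0; apply: nb.
  have i0 : (0 < i)%N.
    rewrite lt0n; apply: contra ci => /eqP i0.
    by rewrite (_ : i = ord0) ?c0 //; apply: val_inj.
  have hi := ltn_ord i.
  have hj : (i.-1 < n)%N by lia.
  exists (Ordinal hj); rewrite tnth_behead.
  rewrite (_ : inord _ = i) //; apply: val_inj => /=.
  rewrite inordK /=; lia.
apply: (integral_pt (r / tnth c ord0)) => x xr.
apply: lebint0 => t; apply: gH; rewrite dotS.
have -> : dotc t [tuple of behead c] = 0.
  rewrite /dotc big1 // => j _.
  have : ~ (tnth [tuple of behead c] j != 0) by move=> h; apply: nb; exists j.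
  by move/negP; rewrite negbK => /eqP ->; rewrite mulr0.
rewrite addr0; apply: contra xr => /eqP <-; rewrite mulfK //.
Qed.

End Meas.

Lemma size_flat_rect (T : Type) (ss : seq (seq T)) k :
  all (fun s => size s == k) ss -> size (flatten ss) = (size ss * k)%N.
Proof.
elim: ss => //= s ss IH /andP[/eqP hs hss].
by rewrite size_cat hs IH // mulSn.
Qed.

Lemma nth_flat_rect (T : Type) (x0 : T) (ss : seq (seq T)) k i j :
  all (fun s => size s == k) ss -> (j < k)%N ->
  nth x0 (flatten ss) (i * k + j) = nth x0 (nth [::] ss i) j.
Proof.
elim: ss i => [|s ss IH] i /=.
  by move=> _ jk; rewrite !nth_nil.
move=> /andP[/eqP hs hss] jk; rewrite nth_cat hs.
case: i => [|i]; first by rewrite mul0n add0n jk.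
rewrite ifF; last by apply/negbTE; rewrite -leqNgt mulSn -addnA leq_addr.
by rewrite mulSn -addnA addKn IH.
Qed.

Lemma sum_rect (R : realType) (G : nat -> R) p k :
  \sum_(0 <= l < p * k) G l = \sum_(0 <= i < p) \sum_(0 <= j < k) G (i * k + j)%N.
Proof.
elim: p => [|p IH]; first by rewrite mul0n !big_geq.
rewrite big_nat_recr //= -IH mulSnr (@big_cat_nat _ _ _ (p * k) 0 (p * k + k)) ?leq_addr //=.
congr (_ + _).
rewrite -{1}[(p * k)%N]add0n big_addn addKn.
by apply: eq_bigr => j _; rewrite addnC.
Qed.

Definition rect (p k : nat) (F : nat -> nat -> int) : seq int :=
  flatten [seq [seq F i j | j <- iota 0 k] | i <- iota 0 p].

Lemma rect_all p k F : all (fun s : seq int => size s == k) [seq [seq F i j | j <- iota 0 k] | i <- iota 0 p].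
Proof. by apply/allP => s /mapP[i _ ->]; rewrite size_map size_iota. Qed.

Lemma size_rect p k F : size (rect p k F) = (p * k)%N.
Proof. by rewrite /rect (@size_flat_rect _ _ _ (rect_all p k F)) size_map size_iota. Qed.

Lemma nth_rect p k F i j : (i < p)%N -> (j < k)%N -> nth 0 (rect p k F) (i * k + j) = F i j.
Proof.
move=> ip jk; rewrite /rect (@nth_flat_rect _ 0 _ _ _ _ (rect_all p k F)) //.
by rewrite (nth_map 0) ?size_iota // nth_iota // (nth_map 0) ?size_iota // nth_iota.
Qed.

Section Comb.
Context (R : realType).

Definition Lmat (x a : seq R) := flatten [seq [seq xi * aj | aj <- a] | xi <- x].

Lemma Lmat_all (x a : seq R) : all (fun s => size s == size a) [seq [seq xi * aj | aj <- a] | xi <- x].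
Proof. by apply/allP => s /mapP[xi _ ->]; rewrite size_map. Qed.

Lemma size_Lmat x a : size (Lmat x a) = (size x * size a)%N.
Proof. by rewrite /Lmat (@size_flat_rect _ _ _ (Lmat_all x a)) size_map. Qed.

Lemma nth_Lmat x a i j : (i < size x)%N -> (j < size a)%N ->
  nth 0 (Lmat x a) (i * size a + j) = nth 0 x i * nth 0 a j.
Proof.
move=> ip jk; rewrite /Lmat (@nth_flat_rect _ 0 _ _ _ _ (Lmat_all x a)) //.
by rewrite (nth_map 0) // (nth_map 0).
Qed.

Definition cvec (beta a : seq R) (m : seq int) (i : nat) : R :=
  (nth 0 m 0)%:~R * nth 0 beta i +
  \sum_(j < size a) (nth 0 m (1 + i * size a + j)%N)%:~R * nth 0 a j.

Lemma relsum (x a beta : seq R) (m : seq int) :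
  size beta = size x ->
  \sum_(l < size ((\sum_(i < size x) nth 0 x i * nth 0 beta i) :: Lmat x a))
     (nth 0 m l)%:~R * nth 0 ((\sum_(i < size x) nth 0 x i * nth 0 beta i) :: Lmat x a) l
  = \sum_(i < size x) nth 0 x i * cvec beta a m i.
Proof.
move=> hb.
rewrite /= big_ord_recl /= size_Lmat.
have -> : \sum_(i < size x * size a) (nth 0 m (bump 0 i))%:~R * nth 0 (Lmat x a) (0 + i)
   = \sum_(0 <= l < size x * size a) (nth 0 m l.+1)%:~R * nth 0 (Lmat x a) l.
  by rewrite big_mkord; apply: eq_bigr => i _; rewrite /bump leq0n.
rewrite sum_rect big_distrr /= big_mkord -big_split /=.
apply: eq_bigr => i _.
rewrite /cvec mulrDr; congr (_ + _); first by rewrite mulrCA.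
rewrite big_mkord mulr_sumr; apply: eq_bigr => j _.
by rewrite nth_Lmat // -addnA add1n mulrCA.
Qed.


Definition sq (m : seq int) : nat := (\sum_(l < size m) `|nth 0%R m l| ^ 2)%N.

Lemma znormE (m : seq int) : znorm R m = Num.sqrt ((sq m)%:R : R).
Proof.
rewrite /znorm /sq natr_sum; congr Num.sqrt; apply: eq_bigr => l _.
by rewrite natrX natr_absz intr_norm real_normK // num_real.
Qed.

Lemma sq_ge1 (m : seq int) : has (fun z => z != 0) m -> (1 <= sq m)%N.
Proof.
move/(has_nthP 0) => [l hl nz].
rewrite /sq (bigD1 (Ordinal hl)) //=; apply: leq_trans (leq_addr _ _).
by rewrite expn_gt0 absz_gt0 nz.
Qed.

Lemma det (C : R) (ira : IRA R) (a beta x : seq R) :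
  is_IRA C ira -> rat_indep a -> size beta = size x -> all (fun b => b \in a) beta ->
  (forall m : seq int, (exists2 i, (i < size x)%N & cvec beta a m i != 0) ->
      \sum_(i < size x) nth 0 x i * cvec beta a m i != 0) ->
  (ihdr ira (\sum_(i < size x) nth 0 x i * nth 0 beta i) a x).1 = beta /\
  ((ihdr ira (\sum_(i < size x) nth 0 x i * nth 0 beta i) a x).2)%:R
     <= (1 + 3 * `|C|) * ((size x + size a + 1)%:R) ^+ 6.
Proof.
move=> hira hind hsz hmem nz.
set Y := \sum_(i < size x) nth 0 x i * nth 0 beta i.
rewrite /ihdr -/(Lmat x a).
set k := size a; set p := size x.
pose idx i := index (nth 0 beta i) a.
have idxlt i : (i < p)%N -> (idx i < k)%N.
  by move=> ip; rewrite /idx index_mem; apply: (all_nthP 0 hmem); rewrite hsz.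
have nth_idx i : (i < p)%N -> nth 0 a (idx i) = nth 0 beta i.
  by move=> ip; rewrite /idx nth_index //; apply: (all_nthP 0 hmem); rewrite hsz.
pose mstar : seq int := 1 :: rect p k (fun i j => if j == idx i then -1 else 0).
have hstar : int_rel (Y :: Lmat x a) mstar.
  split; first by rewrite /= size_rect size_Lmat.
  split; first by [].
  rewrite relsum // big1 // => i _.
  rewrite /cvec /= mul1r.
  under eq_bigr => j _ do rewrite add0n nth_rect //.
  rewrite (bigD1 (Ordinal (idxlt i (ltn_ord i)))) //= eqxx big1 ?addr0.
    by rewrite nth_idx // (_ : (-1)%:~R = -1) // mulN1r subrr mulr0.
  move=> j /negP jn; rewrite ifF ?mul0r //; apply/negP => /eqP h; apply: jn.
  by apply/eqP/val_inj.
have [hrel hbound] := hira _ (ex_intro _ mstar hstar).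
set mo := (ira (Y :: Lmat x a)).1 in hrel *.
have c0 i : (i < p)%N -> cvec beta a mo i = 0.
  move=> ip; apply: contrapT => /eqP hne.
  have := nz mo (ex_intro2 _ _ i ip hne).
  by case: hrel => _ [_]; rewrite relsum // => ->; rewrite eqxx.
have E i j : (i < p)%N -> (j < k)%N ->
    nth 0 mo (1 + i * k + j)%N = if j == idx i then - nth 0 mo 0 else 0.
  move=> ip jk.
  pose q := [seq (((nth 0 mo (1 + i * k + j')%N) + (if j' == idx i then nth 0 mo 0 else 0))%:~R : rat) | j' <- iota 0 k].
  have hq : nth 0 q j = 0.
    apply: hind; first by rewrite size_map size_iota.
    under eq_bigr => j' _ do rewrite (nth_map 0) ?size_iota // nth_iota // add0n ratr_int intrD mulrDl.
    rewrite big_split /=.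
    have s2 : \sum_(j' < k) ((if (j' : nat) == idx i then nth 0 mo 0 else 0)%:~R : R) * nth 0 a j'
        = (nth 0 mo 0)%:~R * nth 0 beta i.
      rewrite (bigD1 (Ordinal (idxlt i ip))) //= eqxx big1 ?addr0 ?nth_idx //.
      move=> j' /negP jn; rewrite ifF ?mul0r //; apply/negP => /eqP h; apply: jn.
      by apply/eqP/val_inj.
    rewrite s2.
    have := c0 i ip; rewrite /cvec => h; rewrite -[RHS]h addrC.
    done.
  move: hq; rewrite (nth_map 0) ?size_iota // nth_iota // add0n => /eqP.
  rewrite intr_eq0 addr_eq0 => /eqP ->; case: ifP => //; by rewrite oppr0.
have hsize : size mo = (p * k).+1 by case: hrel => -> _; rewrite /= size_Lmat.
have mo0 : nth 0 mo 0 != 0.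
  apply/negP => /eqP h0; case: hrel => _ [hhas _].
  move/(has_nthP 0): hhas => [[|l]]; first by rewrite h0 eqxx.
  rewrite hsize ltnS => lpk; apply/negP; rewrite negbK.
  have kpos : (0 < k)%N by rewrite lt0n; apply/negP => /eqP k0; move: lpk; rewrite k0 muln0.
  have := E (l %/ k)%N (l %% k)%N; rewrite -addnA -divn_eq add1n h0 oppr0.
  rewrite ltn_divLR // ltn_pmod // => /(_ lpk isT) ->; by case: ifP.
rewrite -nth0 (negbTE mo0) /=.
split.
  apply: (@eq_from_nth _ 0); first by rewrite size_map size_iota.
  move=> i; rewrite size_map size_iota => ip.
  rewrite (nth_map 0) ?size_iota // nth_iota // add0n.
  rewrite (@eq_in_find _ _ (pred1 (idx i))); last first.
    move=> j; rewrite mem_iota add0n => /andP[_ jk] /=.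
    by rewrite E //; case: (j == idx i) => /=; rewrite ?oppr_eq0 ?mo0 ?eqxx.
  have := index_uniq 0 (_ : (idx i < size (iota 0 k))%N) (iota_uniq 0 k).
  rewrite size_iota nth_iota ?add0n; last exact: idxlt.
  rewrite /index => ->; last exact: idxlt.
  by rewrite nth_idx.
have exP : exists n, (fun n => `[< exists m, int_rel (Y :: Lmat x a) m /\ sq m = n >]) n.
  by exists (sq mstar); apply/asboolP; exists mstar.
case: (ex_minnP exP) => n /asboolP [mmin [hmin hsq]] hle.
have hmin' : forall m', int_rel (Y :: Lmat x a) m' -> znorm R mmin <= znorm R m'.
  move=> m' h'; rewrite !znormE ler_wsqrtr // ler_nat hsq; apply: hle.
  by apply/asboolP; exists m'.
have hcnt := hbound mmin hmin hmin'.
rewrite /= size_Lmat -/p -/k in hcnt.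
set K : R := ((p * k).+1)%:R in hcnt.
have ent : forall l, (`|nth 0%R mstar l| <= 1)%N.
  case=> [//|l] /=.
  case: (ltnP l (size (rect p k (fun i j => if j == idx i then -1 else 0)))) => hl; last first.
    by rewrite nth_default.
  have /flattenP [s /mapP [i _ ->] /mapP [j _ ->]] := mem_nth 0%R hl.
  by case: ifP.
have sqstar : (sq mstar <= (p * k).+1)%N.
  rewrite /sq; apply: (@leq_trans (\sum_(l < size mstar) 1)%N).
    apply: leq_sum => l _; have := ent l; case: (absz _) => [|[|]]//.
  by rewrite sum1_card card_ord /= size_rect.
have sqge1 : forall m, int_rel (Y :: Lmat x a) m -> 1 <= (sq m)%:R :> R.
  by move=> m [_ [hh _]]; rewrite ler1n; apply: sq_ge1.
have sqrt_le : forall m, int_rel (Y :: Lmat x a) m -> 1 <= znorm R m <= (sq m)%:R.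
  move=> m hm; rewrite znormE; have h1 := sqge1 m hm.
  have u1 : 1 <= Num.sqrt ((sq m)%:R : R) by rewrite -[X in X <= _]sqrtr1; apply: ler_wsqrtr.
  apply/andP; split => //.
  rewrite -{2}(@sqr_sqrtr _ ((sq m)%:R)) ?ler0n // expr2.
  by rewrite ler_peMl // (le_trans _ u1).
have [z1 _] := andP (sqrt_le _ hmin).
have zle : znorm R mmin <= K.
  apply: (le_trans (hmin' _ hstar)); have /andP[_ h2] := sqrt_le _ hstar.
  by apply: (le_trans h2); rewrite ler_nat.
have lnz0 : 0 <= ln (znorm R mmin) by apply: ln_ge0.
have lnzK : ln (znorm R mmin) <= K.
  apply: le_trans zle; apply/ltW/ln_sublinear; exact: (lt_le_trans ltr01 z1).
have K1 : 1 <= K by rewrite ler1n.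
set t := ln (znorm R mmin) in lnz0 lnzK hcnt.
have hE0 : 0 <= K ^+ 3 + K ^+ 2 * t.
  by apply: addr_ge0; [apply: exprn_ge0; apply: (le_trans ler01 K1)| apply: mulr_ge0 => //; apply: exprn_ge0; apply: (le_trans ler01 K1)].
have hE : K ^+ 3 + K ^+ 2 * t <= 2 * K ^+ 3.
  have h : K ^+ 2 * t <= K ^+ 3 by rewrite (exprSr K 2); apply: ler_wpM2l => //; apply: exprn_ge0; apply: (le_trans ler01 K1).
  lra.
have hira2 : ((ira (Y :: Lmat x a)).2)%:R <= `|C| * (2 * K ^+ 3).
  apply: (le_trans hcnt); apply: (le_trans (ler_wpM2r hE0 (ler_norm C))).
  by apply: ler_wpM2l.
have hpk : ((p * k)%N)%:R <= K ^+ 3 :> R.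
  rewrite /K -natrX ler_nat; apply: leq_trans (leqnSn _) _.
  by rewrite -{1}(expn1 (p * k).+1) leq_pexp2l.
have hKN : K ^+ 3 <= ((p + k + 1)%:R) ^+ 6 :> R.
  rewrite /K -!natrX ler_nat (_ : 6 = 2 * 3)%N // expnM leq_exp2r //; nia.
have c0' : 0 <= `|C| by [].
have hc : `|C| * K ^+ 3 <= `|C| * ((p + k + 1)%:R) ^+ 6 by apply: ler_wpM2l.
rewrite natrD.
set N6 := ((p + k + 1)%:R) ^+ 6 in hKN hc *.
set K3 := K ^+ 3 in hE0 hE hira2 hpk hKN hc *.
set cc := `|C| in hira2 c0' hc *.
set i2 := ((ira (Y :: Lmat x a)).2)%:R in hira2 *.
set pk := ((p * k)%N)%:R in hpk *.
have hN : 0 <= cc * N6 by apply: mulr_ge0 => //; rewrite /N6 exprn_ge0 // ler0n.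
nra.
Qed.

End Comb.

Arguments cvec {R}.
Arguments dotc {R n}.
Arguments lebint_hyper {R n}.
Arguments det {R}.

Theorem theorem5 (R : realType) (C : R) :
  exists (c : R) (deg : nat),
  forall (d : measure_display) (T : measurableType d) (P : probability T R)
    (p : nat) (a : seq R) (beta : p.-tuple R) (X : T -> p.-tuple R) (Y : T -> R)
    (ira : IRA R),
    is_IRA C ira ->
    rat_indep a ->
    (forall i, tnth beta i \in a) ->
    jointly_continuous P X ->
    (forall w, Y w = \sum_(i < p) tnth (X w) i * tnth beta i) ->
    {ae P, forall w,
      (ihdr ira (Y w) a (X w)).1 = beta /\
      ((ihdr ira (Y w) a (X w)).2)%:R <= c * ((p + size a + 1)%:R) ^+ deg}.
Proof.
exists (1 + 3 * `|C|), 6%N.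
move=> d T P p a beta X Y ira hira hind hmem [mX [f [mf [f0 hP]]]] hY.
pose bad (m : seq int) := [set w | (exists2 i, (i < p)%N & cvec beta a m i != 0) /\
   \sum_(i < p) nth 0 (X w : seq R) i * cvec beta a m i = 0].
pose F (k : nat) := match @unpickle (seq int) k with Some m => bad m | None => set0 end.
have negF : forall k, P.-negligible (F k).
  move=> k; rewrite /F; case: (unpickle k) => [m|]; last exact: negligible_set0.
  have [[i ip ci]|nex] := pselect (exists2 i, (i < p)%N & cvec beta a m i != 0); last first.
    apply: (negligibleS _ (negligible_set0 _)) => w [h _]; exact: nex h.
  pose cT : p.-tuple R := [tuple cvec beta a m i | i < p].
  pose H := [set t : p.-tuple R | dotc t cT = 0].
  have mH : measurable H.
    have md : measurable_fun setT (fun t : p.-tuple R => dotc t cT).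
      apply: measurable_sum => j; apply: measurable_funM => //; first exact: measurable_tnth.
    have := md measurableT _ (measurable_set1 0); rewrite setTI; exact.
  exists (X @^-1` H); split.
  - by have := mX measurableT _ mH; rewrite setTI.
  - rewrite hP //; apply: (lebint_hyper cT 0).
      by exists (Ordinal ip); rewrite tnth_mktuple.
    by move=> t ht; rewrite indicE memNset ?mul0r //; apply/eqP.
  - move=> w [_ hw]; rewrite /H /= /dotc -[RHS]hw; apply: eq_bigr => j _.
    by rewrite tnth_mktuple (tnth_nth 0).
apply: (negligibleS _ (negligible_bigcup negF)).
move=> w nQ; apply: contrapT => nF; apply: nQ.
have hYw : Y w = \sum_(i < size (X w)) nth 0 (X w : seq R) i * nth 0 (beta : seq R) i.
  rewrite hY size_tuple; apply: eq_bigr => i _; by rewrite !(tnth_nth 0).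
suff hh : (ihdr ira (Y w) a (X w)).1 = beta /\ ((ihdr ira (Y w) a (X w)).2)%:R <= (1 + 3 * `|C|) * ((p + size a + 1)%:R) ^+ 6 by exact: hh.
rewrite hYw.
have := det C ira a beta (X w) hira hind _ _ _.
rewrite !size_tuple => H; apply: H.
- by rewrite ?size_tuple.
- by apply/allP => b /tnthP [i ->].
- move=> m hex; apply/eqP => hs; apply: nF.
  exists (pickle m) => //; rewrite /F pickleK; split => //.
Qed.
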